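(* Let $s\in\mathbb N$ and $\delta>0$, and suppose $0<\varepsilon\le\min\{1/(2s),\delta/2\}$. For every $\beta>0$ and $\ell\in\mathbb N$ there is some $\gamma=\gamma(s,\delta,\beta,\ell)>0$ such that the following holds for all sufficiently large $m$. Let $V_1,\dots,V_s$ be pairwise disjoint sets of vertices of a graph $G$, each of size $m$, such that for every $i\in[s-1]$ the pair $(V_i,V_s)$ is $\varepsilon$-regular of density at least $\delta$. Then there is a subset $U_s\subseteq V_s$ of size at least $m^{1-\beta}$ such that every set of $\ell$ vertices from $U_s$ has at least $\gamma m$ common neighbours in each of the sets $V_i$, $i\in[s-1]$.
   Context: For disjoint vertex sets $S,T$ in a graph, $d(S,T)=e(S,T)/(|S||T|)$, where $e(S,T)$ is the number of edges with one endpoint in $S$ and the other in $T$; the density of the pair $(A,B)$ is $d(A,B)$. Given $\varepsilon>0$, a pair $(A,B)$ of disjoint vertex sets is $\varepsilon$-regular if for all $X\subseteq A$, $Y\subseteq B$ with $|X|>\varepsilon|A|$ and $|Y|>\varepsilon|B|$ we have $|d(X,Y)-d(A,B)|<\varepsilon$. *)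

(* Defs.v *)
From HB Require Import structures.
From mathcomp Require Import all_boot all_order all_algebra.
From mathcomp Require Import reals exp.
Set Implicit Arguments. Unset Strict Implicit. Unset Printing Implicit Defensive.
Import Order.TTheory GRing.Theory Num.Theory.
Local Open Scope ring_scope.

Definition simple_graph (T : finType) (adj : rel T) : Prop :=
  symmetric adj /\ irreflexive adj.

(* e(S,T): number of edges with one endpoint in S and the other in T
   (for disjoint S, T these are exactly the adjacent pairs in S x T). *)
Definition edges_between (T : finType) (adj : rel T) (A B : {set T}) : nat :=
  #|[set p in setX A B | adj p.1 p.2]|.

Definition density (R : realType) (T : finType) (adj : rel T) (A B : {set T}) : R :=
  (edges_between adj A B)%:R / (#|A| * #|B|)%:R.

Definition eps_regular (R : realType) (T : finType) (adj : rel T) (eps : R)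
    (A B : {set T}) : Prop :=
  [disjoint A & B] /\
  forall X Y : {set T}, X \subset A -> Y \subset B ->
    eps * #|A|%:R < #|X|%:R -> eps * #|B|%:R < #|Y|%:R ->
    `|density R adj X Y - density R adj A B| < eps.

Definition common_nbrs (T : finType) (adj : rel T) (S W : {set T}) : {set T} :=
  [set v in W | [forall u in S, adj u v]].

(* Main.v *)
Require Import Defs.
From HB Require Import structures.
From mathcomp Require Import all_boot all_order all_algebra.
From mathcomp Require Import reals exp.
From mathcomp Require Import lra zify.
Import Order.TTheory GRing.Theory Num.Theory.
Local Open Scope ring_scope.

Lemma card_bigcup_le (T I : finType) (F : I -> {set T}) :
  (#|\bigcup_i F i| <= \sum_i #|F i|)%N.
Proof.
elim/big_rec2: _ => [|i n A _ h]; first by rewrite cards0.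
apply: leq_trans (leq_card_setU _ _).1 _.
by rewrite leq_add2l.
Qed.

Lemma edges_sum (T : finType) (adj : rel T) (A L : {set T}) :
  symmetric adj ->
  edges_between adj A L = (\sum_(b in L) #|common_nbrs adj [set b] A|)%N.
Proof.
move=> hs; rewrite /edges_between.
rewrite -sum1_card.
rewrite (eq_bigl (fun p => (p.1 \in A) && ((p.2 \in L) && adj p.1 p.2))); last first.
  by move=> [a b]; rewrite !inE andbA.
rewrite -(pair_big_dep (fun a => a \in A) (fun a b => (b \in L) && adj a b) (fun _ _ => 1%N)) /=.
rewrite (exchange_big_dep (fun b => b \in L)) /=; last by move=> a b _ /andP[].
apply: eq_bigr => b bL; rewrite sum1_card; apply: eq_card => a.
rewrite unfold_in /= !inE; case: (a \in A) => //=.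
rewrite bL /=; apply/idP/forallP => [h u|h].
  by apply/implyP; rewrite inE => /eqP->; rewrite hs.
by have := h b; rewrite inE eqxx /= hs.
Qed.

Lemma lowdeg (R : realType) (T : finType) (adj : rel T) (eps delta c : R)
   (A B : {set T}) (m : nat) :
  symmetric adj -> eps_regular adj eps A B -> delta <= density R adj A B ->
  0 < eps -> eps < 1 -> c <= delta - eps -> #|A| = m -> (0 < m)%N ->
  #|[set v in B | #|common_nbrs adj [set v] A|%:R < c * m%:R]|%:R
     <= eps * #|B|%:R.
Proof.
move=> hs [_ hreg] hd he0 he1 hc hA hm.
set L := [set v in B | _].
rewrite leNgt; apply/negP => hL.
have LB : L \subset B by apply/subsetP => v; rewrite inE => /andP[].
have hAm : eps * #|A|%:R < #|A|%:R.
  by rewrite -[X in _ < X]mul1r ltr_pM2r // hA ltr0n.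
have := hreg A L (subxx A) LB hAm hL.
have L0 : (0 < #|L|)%N.
  rewrite -(ltr0n R); apply: le_lt_trans hL.
  by rewrite mulr_ge0 // ltW.
have hlt : density R adj A L < c.
  rewrite /density edges_sum // natr_sum hA.
  have m0 : (0 : R) < (m * #|L|)%:R by rewrite ltr0n muln_gt0 hm.
  rewrite ltr_pdivrMr // natrM.
  have -> : c * (m%:R * #|L|%:R) = \sum_(b in L) (c * m%:R).
    by rewrite sumr_const mulrA mulr_natr.
  apply: ltr_sum.
    by case/card_gt0P: L0 => x xL; apply/hasP; exists x => //; rewrite mem_enum.
  by move=> b; rewrite inE => /andP[].
apply/negP; rewrite -leNgt distrC.
apply: le_trans (ler_norm _).
move: hlt hc hd; set x := density _ _ _ _; set y := density _ _ _ _; lra.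
Qed.
Lemma num_final (R : realType) (m w a p q : R) (l K : nat) :
  1 <= m -> 0 < a -> a <= 1 -> 0 < p -> 4 <= q * p -> a * q * p < 4 ->
  m / 2 <= w -> m ^+ l.+1 <= p ^+ K -> (4 / a) ^+ K.+1 <= m ->
  m / p <= w * q - m ^+ l * q ^+ K.+1.
Proof.
move=> m1 a0 a1 p0 hqp haqp hw hpK ham.
have q0 : 0 < q.
  by rewrite -(pmulr_rgt0 _ p0) mulrC; apply: lt_le_trans hqp.
have m0 : 0 < m by lra.
have h1 : 2 * m / p <= w * q.
  rewrite ler_pdivrMr //.
  apply: le_trans (_ : (m / 2) * (q * p) <= _); first by nra.
  by rewrite mulrA ler_pM2r // ler_pM2r.
have hq : q <= 4 / (a * p).
  by rewrite ler_pdivlMr ?mulr_gt0 //; rewrite mulrA [q * a]mulrC; apply: ltW.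
have h2 : q ^+ K.+1 <= m / p ^+ K.+1.
  apply: le_trans (_ : (4 / (a * p)) ^+ K.+1 <= _).
    by apply: lerXn2r => //; rewrite ?nnegrE ?ltW // divr_gt0 // mulr_gt0.
  rewrite invfM mulrA exprMn exprVn ler_pM2r ?invr_gt0 ?exprn_gt0 //.
have h3 : m ^+ l * q ^+ K.+1 <= 1 / p.
  apply: le_trans (_ : m ^+ l * (m / p ^+ K.+1) <= _).
    by rewrite ler_pM2l ?exprn_gt0.
  rewrite mulrA -exprSr exprSr ler_pdivrMr ?exprn_gt0 //.
  rewrite mulrAC ler_pdivlMr // mul1r exprSr ler_pM2r // -exprSr; exact: hpK.
have h4 : 1 / p <= m / p by rewrite ler_pM2r ?invr_gt0.
have e : 2 * m / p = m / p + m / p by rewrite -mulrDl; congr (_ * _); lra.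
move: h1 h3 h4 e; set x := m / p; set y := 1 / p; set z := 2 * m / p; lra.
Qed.

Lemma exists_t (R : realType) (a p : R) :
  0 < a -> a <= 1 / 2 -> 4 <= p ->
  exists t, 4 <= a ^+ t * p /\ a ^+ t.+1 * p < 4.
Proof.
move=> a0 a2 p4.
have p0 : 0 <= p by lra.
set N := Num.Def.archi_bound p.
have hN := archi_boundP p0; rewrite -/N in hN.
have notN : ~ (4 <= a ^+ N * p).
  have h2 : a ^+ N * 2 ^+ N <= 1.
    rewrite -exprMn; apply: exprn_ile1; first by rewrite mulr_ge0 // ltW.
    lra.
  have h3 : (N%:R : R) < 2 ^+ N.
    by rewrite -natrX ltr_nat ltn_expl.
  move=> h; have : a ^+ N * p < 1.
    apply: lt_le_trans h2.
    by rewrite ltr_pM2l ?exprn_gt0 //; apply: lt_trans h3.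
  lra.
have : forall n, ~ (4 <= a ^+ n * p) ->
  exists t, 4 <= a ^+ t * p /\ a ^+ t.+1 * p < 4.
  elim => [|n IH] h; first by exfalso; apply: h; rewrite expr0 mul1r.
  case: (boolP (4 <= a ^+ n * p)) => hn.
    by exists n; split => //; rewrite ltNge; apply/negP.
  exact: IH (fun x => (negP hn) x).
by apply; exact: notN.
Qed.
Lemma double_count (I J : finType) (A : {pred I}) (B : {pred J})
   (r : I -> J -> bool) :
  (\sum_(i in A) #|[set j in B | r i j]| =
   \sum_(j in B) #|[set i in A | r i j]|)%N.
Proof.
rewrite (eq_bigr (fun i => \sum_(j in B | r i j) 1)%N); last first.
  by move=> i _; rewrite sum1_card; apply: eq_card => j; rewrite inE.
rewrite (exchange_big_dep (fun j => j \in B)) /=; last by move=> i j _ /andP[].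
apply: eq_bigr => j jB.
by rewrite sum1_card; apply: eq_card => i; rewrite unfold_in /= inE jB.
Qed.

Lemma card_fam_prod (aT rT : finType) (F : aT -> {set rT}) :
  #|[set f : {ffun aT -> rT} | [forall x, f x \in F x]]| =
  (\prod_x #|F x|)%N.
Proof.
transitivity #|family F|.
  by apply: eq_card => f; rewrite inE; apply/forallP/familyP.
by rewrite card_family foldrE big_map big_enum.
Qed.

Lemma bin_le_exp n l : ('C(n, l) <= n ^ l)%N.
Proof.
have h : (n ^_ l <= n ^ l)%N.
  elim: l n => [|l IH] [|n] //.
  rewrite ffactSS expnS leq_mul2l; apply/orP; right.
  apply: leq_trans (IH n) _; case: (posnP l) => [->//|lp]; by rewrite leq_exp2r.
rewrite -bin_ffact in h; apply: leq_trans h; by rewrite leq_pmulr ?fact_gt0.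
Qed.

Lemma prod_bad (R : realType) (T : finType) (adj : rel T) (k t m : nat)
   (V' : 'I_k -> {set T}) (S : {set T}) (g : R) (i0 : 'I_k) :
  (forall i, #|V' i| = m) -> 0 <= g ->
  #|common_nbrs adj S (V' i0)|%:R < g * m%:R ->
  \prod_(x : 'I_k * 'I_t) (#|common_nbrs adj S (V' x.1)|%:R : R)
    <= g ^+ t * m%:R ^+ (k * t).
Proof.
move=> hV g0 hi0.
apply: le_trans (_ : \prod_(x : 'I_k * 'I_t)
    ((if x.1 == i0 then g else 1) * m%:R) <= _).
  apply: ler_prod => x _; rewrite ler0n /=.
  case: (x.1 =P i0) => [->|_]; first exact: ltW.
  rewrite mul1r ler_nat -(hV x.1); apply: subset_leq_card.
  by apply/subsetP => v; rewrite inE => /andP[].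
rewrite big_split /= prodr_const card_prod !card_ord.
rewrite -(pair_bigA _ (fun i (j : 'I_t) => if i == i0 then g else 1)) /=.
rewrite (eq_bigr (fun i => if i == i0 then g ^+ t else 1)); last first.
  by move=> i _; case: eqP => _; rewrite prodr_const ?card_ord ?expr1n.
by rewrite -big_mkcond big_pred1_eq.
Qed.

Lemma counting (R : realType) (T : finType) (adj : rel T) (k t : nat)
   (V' : 'I_k -> {set T}) (W : {set T}) (m l : nat) (c g : R) :
  (0 < m)%N -> (forall i, #|V' i| = m) -> 0 <= c -> 0 <= g ->
  (forall v, v \in W -> forall i,
     c * m%:R <= #|common_nbrs adj [set v] (V' i)|%:R) ->
  exists f : {ffun 'I_k * 'I_t -> T},
   #|W|%:R * c ^+ (k * t) - (#|W| ^ l)%N%:R * g ^+ t <=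
   #|[set v in W | [forall x, adj v (f x)]]|%:R -
   #|[set S : {set T} | (S \subset [set v in W | [forall x, adj v (f x)]]) &&
        ((#|S| == l) &&
         [exists i, #|common_nbrs adj S (V' i)|%:R < g * m%:R])]|%:R.
Proof.
move=> m0 hV c0 g0 hW.
set Uf := fun f : {ffun 'I_k * 'I_t -> T} => [set v in W | [forall x, adj v (f x)]].
set bad := fun S : {set T} =>
  (#|S| == l) && [exists i, #|common_nbrs adj S (V' i)|%:R < g * m%:R].
set P := [set f : {ffun 'I_k * 'I_t -> T} | [forall x, f x \in V' x.1]].
set Bad := [set S : {set T} | (S \subset W) && bad S].
set z := (_ - _ : R).
have cardP : #|P| = (m ^ (k * t))%N.
  rewrite /P card_fam_prod (eq_bigr (fun _ => m)) => [|x _]; last exact: hV.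
  by rewrite prod_nat_const card_prod !card_ord.
have sumU : #|W|%:R * (c * m%:R) ^+ (k * t) <= \sum_(f in P) (#|Uf f|%:R : R).
  rewrite -natr_sum (double_count _ _ P W (fun f v => [forall x, adj v (f x)])).
  rewrite natr_sum mulr_natl -sumr_const; apply: ler_sum => v vW.
  have -> : #|[set f in P | [forall x, adj v (f x)]]| =
     #|[set f : {ffun 'I_k * 'I_t -> T} |
        [forall x, f x \in common_nbrs adj [set v] (V' x.1)]]|.
    apply: eq_card => f; rewrite !inE.
    apply/andP/forallP => [[/forallP h1 /forallP h2] x | h].
      rewrite inE h1 /=; apply/forallP => u; apply/implyP.
      by rewrite inE => /eqP ->; exact: h2.
    split; apply/forallP => x; have := h x; rewrite inE => /andP[hx /forallP hu] //.
    by have := hu v; rewrite inE eqxx.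
  rewrite card_fam_prod natr_prod.
  have -> : (c * m%:R) ^+ (k * t) = \prod_(x : 'I_k * 'I_t) (c * m%:R).
    by rewrite prodr_const card_prod !card_ord.
  apply: ler_prod => x _; rewrite mulr_ge0 ?ler0n //=.
  exact: hW.
have sumB : \sum_(f in P) (#|[set S : {set T} | (S \subset Uf f) && bad S]|%:R : R) <=
    (#|W| ^ l)%N%:R * (g ^+ t * m%:R ^+ (k * t)).
  rewrite -natr_sum.
  rewrite (eq_bigr (fun f => #|[set S in Bad | S \subset Uf f]|)); last first.
    move=> f _; apply: eq_card => S; rewrite !inE.
    case: (boolP (S \subset Uf f)) => hS //=; rewrite ?andbT ?andbF //.
    rewrite (subset_trans hS) //; apply/subsetP => v; rewrite inE => /andP[] //.
  rewrite (double_count _ _ P Bad (fun f S => S \subset Uf f)) natr_sum.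
  apply: le_trans (_ : \sum_(S in Bad)
     (\prod_(x : 'I_k * 'I_t) (#|common_nbrs adj S (V' x.1)|%:R : R)) <= _).
    apply: ler_sum => S SB; rewrite -natr_prod ler_nat -card_fam_prod.
    apply: subset_leq_card; apply/subsetP => f; rewrite !inE => /andP[].
    move=> /forallP hf /subsetP hS; apply/forallP => x; rewrite !inE hf /=.
    apply/forallP => u; apply/implyP => uS.
    by have := hS u uS; rewrite inE => /andP[_ /forallP]; apply.
  apply: le_trans (_ : \sum_(S in Bad) (g ^+ t * m%:R ^+ (k * t)) <= _).
    apply: ler_sum => S; rewrite inE => /andP[_ /andP[_ /existsP[i0 hi0]]].
    exact: (@prod_bad R T adj k t m V' S g i0 hV g0 hi0).
  rewrite sumr_const -(mulr_natl _ #|Bad|); apply: ler_wpM2r; first by rewrite mulr_ge0 ?exprn_ge0 ?ler0n.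
  rewrite ler_nat; apply: leq_trans (bin_le_exp _ l).
  rewrite -cards_draws; apply: subset_leq_card; apply/subsetP => S.
  by rewrite !inE => /andP[-> /andP[-> _]].
case: (boolP [exists f in P, z <= #|Uf f|%:R - #|[set S : {set T} | (S \subset Uf f) && bad S]|%:R]).
  by case/existsP => f /andP[_ h]; exists f.
rewrite negb_exists => /forallP hall; exfalso.
have Pn : (0 < #|P|)%N by rewrite cardP expn_gt0 m0.
have : \sum_(f in P) (#|Uf f|%:R - #|[set S : {set T} | (S \subset Uf f) && bad S]|%:R)
       < \sum_(f in P) z.
  apply: ltr_sum.
    by case/card_gt0P: Pn => f fP; apply/hasP; exists f => //; rewrite mem_enum.
  by move=> f fP; have := hall f; rewrite fP /= -ltNge.
rewrite sumrB sumr_const cardP.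
have hz : (m ^ (k * t))%N%:R * z <=
     #|W|%:R * (c * m%:R) ^+ (k * t) - (#|W| ^ l)%N%:R * (g ^+ t * m%:R ^+ (k * t)).
  rewrite /z exprMn natrX; lra.
move: hz sumU sumB; rewrite -mulr_natl.
set A1 := \sum_(f in P) _; set A2 := \sum_(f in P) _; lra.
Qed.

Lemma delete (T : finType) (U0 : {set T}) (bad : pred {set T}) (x0 : T) :
  (forall S, bad S -> S != set0) ->
  exists U : {set T}, [/\ U \subset U0,
    (#|U0| <= #|U| + #|[set S : {set T} | (S \subset U0) && bad S]|)%N &
    forall S : {set T}, S \subset U -> ~~ bad S].
Proof.
move=> hne.
set B0 := [set S : {set T} | (S \subset U0) && bad S].
set D := [set odflt x0 [pick y in S] | S : {set T} in B0].
exists (U0 :\: D); split.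
- exact: subsetDl.
- rewrite -(cardsID D U0) addnC leq_add2l.
  apply: leq_trans (leq_imset_card _ _).
  by apply: subset_leq_card; apply: subsetIr.
- move=> S hS; apply/negP => bS.
  have SB : S \in B0.
    by rewrite inE bS andbT (subset_trans hS) // subsetDl.
  have zD : odflt x0 [pick y in S] \in D by apply: imset_f.
  move: zD; case: pickP => [z zS|h] /= zD.
    by have := subsetP hS z zS; rewrite inE zD.
  by have := hne S bS; case/set0Pn => y; rewrite h.
Qed.

Lemma Wbig (R : realType) (T : finType) (adj : rel T) (V : nat -> {set T})
   (s m : nat) (eps delta c : R) :
  symmetric adj -> (1 < s)%N -> (0 < m)%N -> 0 < eps -> eps < 1 ->
  eps <= 1 / (2 * s)%:R -> c <= delta - eps ->
  (forall i, (1 <= i <= s)%N -> #|V i| = m) ->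
  (forall i, (1 <= i < s)%N ->
       eps_regular adj eps (V i) (V s) /\ delta <= density R adj (V i) (V s)) ->
  (m%:R / 2 : R) <= #|[set v in V s | [forall i : 'I_s.-1,
       c * m%:R <= #|common_nbrs adj [set v] (V i.+1)|%:R]]|%:R.
Proof.
move=> hs s1 m0 e0 e1 es hc hcard hreg.
set W := [set v in V s | _].
set L := fun i : 'I_s.-1 =>
  [set v in V s | #|common_nbrs adj [set v] (V i.+1)|%:R < c * m%:R].
have sub : V s \subset W :|: \bigcup_i L i.
  apply/subsetP => v vs; rewrite inE; case: (boolP (v \in W)) => //= vW.
  move: vW; rewrite inE vs /= negb_forall => /existsP[i hi].
  by apply/bigcupP; exists i => //; rewrite inE vs /= ltNge.
have hm : (m <= #|W| + \sum_i #|L i|)%N.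
  rewrite -(hcard s) ?leqnn ?(ltnW s1) //.
  apply: leq_trans (subset_leq_card sub) _.
  apply: leq_trans (leq_card_setU _ _).1 _.
  by rewrite leq_add2l card_bigcup_le.
have hL : forall i, #|L i|%:R <= eps * m%:R.
  move=> i; have hi : (1 <= i.+1 < s)%N.
    by have := ltn_ord i; lia.
  have [hr hd] := hreg _ hi.
  rewrite -{1}(hcard s); last by rewrite (ltnW s1) leqnn.
  apply: (@lowdeg R T adj eps delta c (V i.+1) (V s) m) => //.
  by apply: hcard; case/andP: hi => -> /ltnW.
have hsum : (\sum_i #|L i|)%:R <= s.-1%:R * (eps * m%:R) :> R.
  rewrite natr_sum; apply: le_trans (_ : \sum_(i : 'I_s.-1) eps * m%:R <= _).
    by apply: ler_sum => i _; apply: hL.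
  by rewrite sumr_const card_ord mulr_natl.
have hks : s.-1%:R * eps <= 1 / 2 :> R.
  have s0 : (0 : R) < (2 * s)%:R by rewrite ltr0n muln_gt0 /= (ltnW s1).
  move: es; rewrite ler_pdivlMr // => es.
  have : s.-1%:R <= s%:R :> R by rewrite ler_nat leq_pred.
  move: es; rewrite natrM => es hsl.
  have : s.-1%:R * eps <= s%:R * eps by rewrite ler_pM2r.
  lra.
have mR : (m%:R : R) <= #|W|%:R + s.-1%:R * (eps * m%:R).
  apply: le_trans (_ : (#|W| + \sum_i #|L i|)%:R <= _); first by rewrite ler_nat.
  by rewrite natrD lerD2l.
have m0R : (0 : R) <= m%:R by rewrite ler0n.
have : s.-1%:R * (eps * m%:R) <= m%:R / 2 :> R.
  rewrite mulrA; apply: le_trans (_ : 1 / 2 * m%:R <= _).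
    by rewrite ler_pM2r ?ltr0n // ; apply: hks.
  by rewrite mulrC mul1r.
lra.
Qed.

Lemma pred_lt (i s : nat) : (1 <= i < s)%N -> (i.-1 < s.-1)%N.
Proof. lia. Qed.

Theorem lemma2p5 (R : realType) (s : nat) (delta : R) (hdelta : 0 < delta) :
  forall (beta : R), 0 < beta -> forall l : nat,
  exists2 gamma : R, 0 < gamma &
  forall eps : R, 0 < eps -> eps <= 1 / (2 * s)%:R -> eps <= delta / 2 ->
  exists M : nat, forall m : nat, (M <= m)%N ->
  forall (T : finType) (adj : rel T) (V : nat -> {set T}),
    simple_graph adj ->
    (forall i j, (1 <= i <= s)%N -> (1 <= j <= s)%N -> i != j ->
       [disjoint V i & V j]) ->
    (forall i, (1 <= i <= s)%N -> #|V i| = m) ->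
    (forall i, (1 <= i < s)%N ->
       eps_regular adj eps (V i) (V s) /\ delta <= density R adj (V i) (V s)) ->
    exists U : {set T},
      [/\ U \subset V s,
          powR (m%:R : R) (1 - beta) <= #|U|%:R &
          forall S : {set T}, S \subset U -> #|S| = l ->
            forall i, (1 <= i < s)%N ->
              gamma * m%:R <= #|common_nbrs adj S (V i)|%:R].
Proof.
move=> beta hbeta l.
case: (ltnP s 2) => hs2.
  exists 1; first exact: ltr01.
  move=> eps e0 es _.
  case: s hs2 es => [|[|//]] _ es.
    by exfalso; move: es; rewrite muln0 invr0 mulr0; lra.
  exists 1%N => m hm T adj V _ _ hcard _.
  exists (V 1%N); split => //.
    rewrite hcard //; apply: ler1_powR; first by rewrite ler1n.
    lra.
  by move=> S _ _ i; case/andP => /leq_trans h /h.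
set k := s.-1.
have k1 : (0 < k)%N by rewrite /k; lia.
set c := Num.min delta 1 / 2.
have c0 : 0 < c by rewrite divr_gt0 // lt_min hdelta ltr01.
have c2 : c <= 1 / 2 by rewrite ler_pM2r ?invr_gt0 ?ltr0n // ge_min lexx orbT.
have cd : c <= delta / 2 by rewrite ler_pM2r ?invr_gt0 ?ltr0n // ge_min lexx.
set a := c ^+ k.
have a0 : 0 < a by rewrite exprn_gt0.
have a2 : a <= 1 / 2.
  apply: le_trans (c2); apply: ler_iXnr => //; first exact: ltW.
  by apply: le_trans (c2) _; rewrite ler_pdivrMr ?ltr0n // mul1r ler1n.
have a1 : a <= 1 by apply: le_trans (a2) _; rewrite ler_pdivrMr ?ltr0n // mul1r ler1n.
set K := Num.Def.archi_bound ((l.+1)%:R / beta).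
have hK : (l.+1)%:R < beta * K%:R.
  have := @archi_boundP R ((l.+1)%:R / beta).
  rewrite divr_ge0 ?ler0n ?ltW // => /(_ isT).
  by rewrite ltr_pdivrMr // mulrC.
have K0 : (0 < K)%N.
  rewrite lt0n; apply/negP => /eqP K0; move: hK; rewrite K0 mulr0 ltNge ler0n.
  by [].
exists (a ^+ K.+1); first by rewrite exprn_gt0.
move=> eps e0 es ed.
set M := Num.Def.archi_bound ((4 / a) ^+ K.+1).
exists M => m hm T adj V [hsym hirr] hdisj hcard hreg.
have hM : (4 / a) ^+ K.+1 < M%:R.
  by apply: archi_boundP; rewrite exprn_ge0 // divr_ge0 // ltW.
have h4a : 1 <= 4 / a.
  by rewrite ler_pdivlMr // mul1r; lra.
have h4a1 : 1 <= (4 / a) ^+ K.+1 by rewrite exprn_ege1.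
have mR : (4 / a) ^+ K.+1 <= m%:R.
  by apply: le_trans (ltW hM) _; rewrite ler_nat.
have m1 : (1 : R) <= m%:R by lra.
have m0 : (0 < m)%N by rewrite -(ltr0n R); lra.
have e1 : eps < 1.
  apply: le_lt_trans (es) _.
  have s2 : (1 < 2 * s)%N by apply: leq_trans (hs2) _; rewrite leq_pmull.
  have s2R : (1 : R) < (2 * s)%:R by rewrite ltr1n.
  by rewrite ltr_pdivrMr ?(lt_trans ltr01 s2R) // mul1r.
have hc : c <= delta - eps by lra.
set W := [set v in V s | [forall i : 'I_s.-1,
       c * m%:R <= #|common_nbrs adj [set v] (V i.+1)|%:R]].
have hW := @Wbig R T adj V s m eps delta c hsym hs2 m0 e0 e1 es hc hcard hreg.
rewrite -/W in hW.
set p := powR (m%:R : R) beta.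
have p0 : 0 < p by apply: powR_gt0; apply: lt_le_trans m1; exact: ltr01.
have hpK : (m%:R : R) ^+ l.+1 <= p ^+ K.
  have e : p ^+ K = powR (m%:R : R) (beta * K%:R).
    by rewrite powRrM powR_mulrn ?powR_ge0.
  have e' : (m%:R : R) ^+ l.+1 = powR (m%:R : R) (l.+1)%:R.
    by rewrite powR_mulrn ?ler0n.
  by rewrite e e'; apply: ler_powR => //; apply: ltW.
have h4K : 4 ^+ K <= p ^+ K.
  apply: le_trans _ (hpK).
  apply: le_trans _ (_ : (m%:R : R) <= m%:R ^+ l.+1); last by rewrite ler_eXnr.
  apply: le_trans _ (mR); apply: le_trans (_ : 4 ^+ K <= (4 / a) ^+ K) _.
    have h44 : (4 : R) <= 4 / a.
      by rewrite ler_pdivlMr // -[X in _ <= X]mulr1 ler_pM2l.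
    have h40 : (0 : R) <= 4 by [].
    by apply: lerXn2r; rewrite ?nnegrE // (le_trans h40 h44).
  exact: (ler_weXn2l h4a (leqnSn K)).
have p4 : 4 <= p.
  rewrite leNgt; apply/negP => hp; move: h4K; rewrite leNgt; apply/negP/negPn.
  by rewrite ltrXn2r ?ltW // -lt0n.
have [t [ht1 ht2]] := @exists_t R a p a0 a2 p4.
have [x0 x0s] : exists x0, x0 \in V s.
  have : (0 < #|V s|)%N by rewrite hcard // (ltnW hs2) leqnn.
  by case/card_gt0P => x hx; exists x.
have hV : forall i : 'I_k, #|V i.+1| = m.
  by move=> i; apply: hcard; rewrite /= (leq_trans (ltn_ord i)) // leq_pred.
have hWv : forall v, v \in W -> forall i : 'I_k,
    c * m%:R <= #|common_nbrs adj [set v] (V i.+1)|%:R.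
  by move=> v; rewrite inE => /andP[_ /forallP].
have g0 : 0 <= a ^+ K.+1 by rewrite exprn_ge0 // ltW.
have [f hf] := @counting R T adj k t (fun i : 'I_k => V i.+1) W m l c (a ^+ K.+1)
   m0 hV (ltW c0) g0 hWv.
set Uf := [set v in W | [forall x, adj v (f x)]] in hf.
set bad := fun S : {set T} => (#|S| == l) &&
   [exists i : 'I_k, #|common_nbrs adj S (V i.+1)|%:R < a ^+ K.+1 * m%:R].
have hne : forall S, bad S -> S != set0.
  move=> S /andP[_ /existsP[i hi]]; apply/negP => /eqP S0; move: hi.
  have -> : common_nbrs adj S (V i.+1) = V i.+1.
    apply/setP => v; rewrite inE S0; case: (v \in V i.+1) => //=.
    by apply/forallP => u; rewrite inE.
  rewrite hV ltNge; apply/negP/negPn.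
  rewrite ler_piMl ?ler0n //; apply: exprn_ile1; first exact: ltW.
  exact: a1.
have [U [UU hUc hUb]] := @delete T Uf bad x0 hne.
exists U; split.
- apply: subset_trans UU _; apply/subsetP => v; rewrite !inE => /andP[/andP[] //].
- have Wm : (#|W| <= m)%N.
    rewrite -(hcard s) ?leqnn ?(ltnW hs2) //; apply: subset_leq_card.
    by apply/subsetP => v; rewrite inE => /andP[].
  have -> : powR (m%:R : R) (1 - beta) = m%:R / p.
    by rewrite powRB ?powRr1 ?ler0n //; apply/implyP => _; rewrite pnatr_eq0 -lt0n.
  have hw : (m%:R / 2 : R) <= #|W|%:R := hW.
  have ht2' : a * a ^+ t * p < 4 by rewrite -exprS.
  have hnf := @num_final R m%:R #|W|%:R a p (a ^+ t) l K m1 a0 a1 p0 ht1 ht2' hw hpK mR.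
  apply: le_trans (hnf) _.
  apply: le_trans (_ : #|W|%:R * c ^+ (k * t) - (#|W| ^ l)%N%:R * (a ^+ K.+1) ^+ t <= _); last first.
    apply: le_trans (hf) _.
    by rewrite lerBlDr -natrD ler_nat; exact: hUc.
  have eq1 : c ^+ (k * t) = a ^+ t by rewrite exprM.
  have eq2 : (a ^+ K.+1) ^+ t = (a ^+ t) ^+ K.+1.
    by rewrite -!exprM (mulnC K.+1).
  rewrite eq1 eq2 lerD2l lerN2; apply: ler_wpM2r; first by rewrite !exprn_ge0 // ltW.
  rewrite natrX; apply: lerXn2r; rewrite ?nnegrE ?ler0n // ler_nat; exact: Wm.
- move=> S SU Sl i hi; rewrite leNgt; apply/negP => hlt.
  have := hUb S SU; rewrite /bad Sl eqxx /= => /negP; apply.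
  have ik : (i.-1 < k)%N by apply: pred_lt.
  apply/existsP; exists (Ordinal ik) => /=.
  by rewrite prednK //; case/andP: hi.
Qed.
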